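(* Let $\Gamma$ be a finitely generated group, let $G$ be a finite group with subgroups $G_1, G_2$, and let $\varphi \colon \Gamma \to G$ be a surjective homomorphism. Suppose that the profinite completions of $\varphi^{-1}(G_1)$ and $\varphi^{-1}(G_2)$ are not isomorphic. Then there exist a finite group $H$, a homomorphism $\psi \colon \Gamma \to H$ and a homomorphism $\theta \colon H \to G$ with $\varphi = \theta \circ \psi$, such that $\theta^{-1}(G_1)$ and $\theta^{-1}(G_2)$ are not isomorphic. *)

(* Defs.v *)
From HB Require Import structures.
From mathcomp Require Import all_boot all_fingroup.

Set Implicit Arguments.
Unset Strict Implicit.
Unset Printing Implicit Defensive.

Record Grp := MkGrp {
  gcar :> Type;
  gmul : gcar -> gcar -> gcar;
  gone : gcar;
  ginv : gcar -> gcar;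
  gmulA : forall x y z, gmul x (gmul y z) = gmul (gmul x y) z;
  gmul1 : forall x, gmul gone x = x;
  gmulV : forall x, gmul (ginv x) x = gone
}.

Section AbstractGroups.
Variable Gam : Grp.

Definition is_subgroup (S : Gam -> Prop) : Prop :=
  [/\ S (gone Gam),
      (forall x y, S x -> S y -> S (gmul x y)) &
      (forall x, S x -> S (ginv x))].

Definition generated (X : Gam -> Prop) (x : Gam) : Prop :=
  forall S, is_subgroup S -> (forall g, X g -> S g) -> S x.

Definition fin_generated : Prop :=
  exists (n : nat) (s : nat -> Gam),
    forall x, generated (fun g => exists2 i, i < n & g = s i) x.

Definition fin_index_normal (D N : Gam -> Prop) : Prop :=
  [/\ is_subgroup N,
      (forall x, N x -> D x),
      (forall x n, D x -> N n -> N (gmul (gmul x n) (ginv x))) &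
      (exists (k : nat) (r : nat -> Gam),
          (forall i, i < k -> D (r i)) /\
          (forall x, D x -> exists2 i, i < k & exists2 n, N n & x = gmul (r i) n))].

Definition FINS (D : Gam -> Prop) := {N : Gam -> Prop | fin_index_normal D N}.

Definition lcoset (N : Gam -> Prop) (x : Gam) : Gam -> Prop :=
  fun y => exists2 n, N n & y = gmul x n.

(* The profinite completion of the subgroup D: the inverse limit of the
   finite quotients D/N over the normal subgroups N of finite index in D,
   realised as compatible families N |-> (a coset of N in D). *)
Definition is_compl_elt (D : Gam -> Prop) (c : FINS D -> Gam -> Prop) : Prop :=
  (forall N : FINS D, exists2 x, D x & forall y, c N y <-> lcoset (sval N) x y) /\
  (forall M N : FINS D, (forall y, sval M y -> sval N y) ->
      forall y, c M y -> c N y).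

Definition completion (D : Gam -> Prop) :=
  {c : FINS D -> Gam -> Prop | is_compl_elt c}.

(* the group law of the completion, as a relation: e = c * d *)
Definition compl_prod (D : Gam -> Prop) (c d e : completion D) : Prop :=
  forall (N : FINS D) y,
    sval e N y <-> exists a b, [/\ sval c N a, sval d N b & y = gmul a b].

(* continuity for the inverse-limit topology: basic open sets are
   {d | d_N = c_N} for c in the completion and N in FINS D *)
Definition compl_continuous (D1 D2 : Gam -> Prop)
    (f : completion D1 -> completion D2) : Prop :=
  forall (c : completion D1) (N2 : FINS D2),
    exists N1 : FINS D1, forall d : completion D1,
      (forall y, sval d N1 y <-> sval c N1 y) ->
      (forall y, sval (f d) N2 y <-> sval (f c) N2 y).

Definition compl_isomorphic (D1 D2 : Gam -> Prop) : Prop :=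
  exists (f : completion D1 -> completion D2) (g : completion D2 -> completion D1),
    [/\ (forall c, g (f c) = c), (forall c, f (g c) = c),
        (forall c d e, compl_prod c d e -> compl_prod (f c) (f d) (f e)),
        compl_continuous f & compl_continuous g].

End AbstractGroups.

Definition is_hom (Gam : Grp) (gT : finGroupType) (f : Gam -> gT) : Prop :=
  forall x y, f (gmul x y) = (f x * f y)%g.

(* Main.v *)
Require Import Defs.
From HB Require Import structures.
From mathcomp Require Import all_boot all_fingroup.
From Stdlib Require Import ClassicalEpsilon PropExtensionality FunctionalExtensionality ProofIrrelevance.

Set Implicit Arguments.
Unset Strict Implicit.
Unset Printing Implicit Defensive.


Section GrpAlg.
Variable Gam : Grp.
Local Notation "x ** y" := (@gmul Gam x y) (at level 40, left associativity).
Local Notation g1 := (gone Gam).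
Local Notation gi := (@ginv Gam).

Lemma gmulA' (x y z : Gam) : x ** (y ** z) = x ** y ** z. Proof. exact: gmulA. Qed.
Lemma gmulV' (x : Gam) : x ** gi x = g1.
Proof.
have h : gi (gi x) ** gi x = g1 by rewrite gmulV.
rewrite -[x ** _]gmul1 -{1}h -gmulA' (gmulA (gi x) x (gi x)) gmulV gmul1.
exact: h.
Qed.
Lemma gmul1r (x : Gam) : x ** g1 = x.
Proof. by rewrite -(gmulV x) gmulA' gmulV' gmul1. Qed.
Lemma gmulKl (x y : Gam) : gi x ** (x ** y) = y.
Proof. by rewrite gmulA' gmulV gmul1. Qed.
Lemma gmulKl' (x y : Gam) : x ** (gi x ** y) = y.
Proof. by rewrite gmulA' gmulV' gmul1. Qed.
Lemma gmulKr (x y : Gam) : x ** y ** gi y = x.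
Proof. by rewrite -gmulA' gmulV' gmul1r. Qed.
Lemma gmulKr' (x y : Gam) : x ** gi y ** y = x.
Proof. by rewrite -gmulA' gmulV gmul1r. Qed.
Lemma gcancl (x y z : Gam) : x ** y = x ** z -> y = z.
Proof. by move=> h; rewrite -(gmulKl x y) h gmulKl. Qed.
Lemma gcancr (x y z : Gam) : y ** x = z ** x -> y = z.
Proof. by move=> h; rewrite -(gmulKr y x) h gmulKr. Qed.
Lemma ginvK (x : Gam) : gi (gi x) = x.
Proof. by apply: (@gcancl (gi x)); rewrite gmulV' gmulV. Qed.
Lemma ginvM (x y : Gam) : gi (x ** y) = gi y ** gi x.
Proof. by apply: (@gcancl (x ** y)); rewrite gmulV' -gmulA' gmulKl' gmulV'. Qed.
Lemma ginv1 : gi g1 = g1.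
Proof. by rewrite -{2}(gmulV g1) gmul1r. Qed.
Lemma ginv_uniq (x y : Gam) : x ** y = g1 -> y = gi x.
Proof. by move=> h; apply: (@gcancl x); rewrite h gmulV'. Qed.

Section Sub.
Variable S : Gam -> Prop.
Hypothesis sS : is_subgroup S.
Lemma sg1 : S g1. Proof. by case: sS. Qed.
Lemma sgM x y : S x -> S y -> S (x ** y). Proof. by case: sS => _ h _; apply: h. Qed.
Lemma sgV x : S x -> S (gi x). Proof. by case: sS => _ _ h; apply: h. Qed.
Lemma sgVi x : S (gi x) -> S x. Proof. by move/sgV; rewrite ginvK. Qed.
End Sub.

Definition eqm (S : Gam -> Prop) (x y : Gam) := S (gi x ** y).

Lemma eqm_refl S x : is_subgroup S -> eqm S x x.
Proof. by move=> sS; rewrite /eqm gmulV; apply: sg1. Qed.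
Lemma eqm_sym S x y : is_subgroup S -> eqm S x y -> eqm S y x.
Proof. by move=> sS; rewrite /eqm => /(sgV sS); rewrite ginvM ginvK. Qed.
Lemma eqm_trans S x y z : is_subgroup S -> eqm S x y -> eqm S y z -> eqm S x z.
Proof.
move=> sS; rewrite /eqm => h1 h2.
by have := sgM sS h1 h2; rewrite -gmulA' gmulKl'.
Qed.
Lemma eqm_mull S x y z : eqm S x y -> eqm S (z ** x) (z ** y).
Proof. by rewrite /eqm ginvM -gmulA' gmulKl. Qed.
Lemma eqm_sub (S T : Gam -> Prop) x y : (forall z, S z -> T z) -> eqm S x y -> eqm T x y.
Proof. by move=> h; apply: h. Qed.

End GrpAlg.

Section HomLemmas.
Variables (Gam : Grp) (gT : finGroupType) (f : Gam -> gT).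
Hypothesis fM : is_hom f.
Lemma hom1 : f (gone Gam) = 1%g.
Proof.
have h := fM (gone Gam) (gone Gam); rewrite gmul1 in h.
by apply: (@mulgI _ (f (gone Gam))); rewrite -h mulg1.
Qed.
Lemma homV x : f (ginv x) = ((f x)^-1)%g.
Proof.
apply: (@mulIg _ (f x)); rewrite -fM gmulV hom1 mulVg //.
Qed.
End HomLemmas.


Section Covers.
Variable Gam : Grp.
Local Notation "x ** y" := (@gmul Gam x y) (at level 40, left associativity).
Local Notation g1 := (gone Gam).
Local Notation gi := (@ginv Gam).

Definition cov (S : Gam -> Prop) (k : nat) (r : nat -> Gam) :=
  forall x, exists2 i, i < k & eqm S (r i) x.
Definition fincov S := exists k r, cov S k r.

Lemma cov_mono S k k' r : cov S k r -> k <= k' -> cov S k' r.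
Proof. by move=> h hk x; case: (h x) => i hi hx; exists i => //; apply: leq_trans hk. Qed.
Lemma cov_sub (S T : Gam -> Prop) k r : (forall z, S z -> T z) -> cov S k r -> cov T k r.
Proof. by move=> hST h x; case: (h x) => i hi hx; exists i => //; apply: hST. Qed.
Lemma cov_pos S k r : cov S k r -> 0 < k.
Proof. by move=> h; case: (h g1) => i hi _; apply: leq_ltn_trans hi. Qed.

Definition inhG : inhabited Gam := inhabits g1.

Lemma cov_inter S T k l r q : is_subgroup S -> is_subgroup T ->
  cov S k r -> cov T l q ->
  exists r', cov (fun z => S z /\ T z) (k * l) r'.
Proof.
move=> sS sT hS hT.
have lpos := cov_pos hT.
pose P i z := eqm S (r (i %/ l)) z /\ eqm T (q (i %% l)) z.
exists (fun i => epsilon inhG (P i)) => x.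
case: (hS x) => a ha hxa; case: (hT x) => b hb hxb.
exists (a * l + b).
  rewrite -ltn_divLR // ?divnMDl // divn_small // addn0 //.
have ea : (a * l + b) %/ l = a by rewrite divnMDl // divn_small // addn0.
have eb : (a * l + b) %% l = b by rewrite modnMDl modn_small.
have hP : P (a * l + b) x by rewrite /P ea eb.
have := epsilon_spec inhG (P (a * l + b)) (ex_intro _ x hP).
set z := epsilon _ _; rewrite /P ea eb => -[h1 h2].
split.
  by apply: eqm_trans sS (eqm_sym sS h1) hxa.
by apply: eqm_trans sT (eqm_sym sT h2) hxb.
Qed.

Lemma cov_ext (S T : Gam -> Prop) k r : (forall z, S z <-> T z) -> cov S k r -> cov T k r.
Proof. by move=> h; apply: cov_sub => z /h. Qed.

Lemma subgroup_ext (S T : Gam -> Prop) : (forall z, S z <-> T z) -> is_subgroup S -> is_subgroup T.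
Proof.
move=> h [h1 hM hV]; split; first by apply/h.
  by move=> x y /h hx /h hy; apply/h; apply: hM.
by move=> x /h hx; apply/h; apply: hV.
Qed.

Lemma subgroupI (S T : Gam -> Prop) : is_subgroup S -> is_subgroup T ->
  is_subgroup (fun z => S z /\ T z).
Proof.
move=> sS sT; split; first by split; apply: sg1.
  by move=> x y [] ? ? [] ? ?; split; apply: sgM.
by move=> x [] ? ?; split; apply: sgV.
Qed.

Lemma subgroupT : is_subgroup (fun _ : Gam => True).
Proof. by []. Qed.

Section FinInter.
Variables (F : finType) (good : F -> Prop) (Sf : F -> Gam -> Prop).
Hypothesis hgood : forall f, good f -> is_subgroup (Sf f) /\ fincov (Sf f).

Definition finI (x : Gam) := forall f, good f -> Sf f x.

Lemma finI_prop : is_subgroup finI /\ fincov finI.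
Proof.
pose Il (l : seq F) x := forall f, f \in l -> good f -> Sf f x.
suff : forall l, is_subgroup (Il l) /\ fincov (Il l).
  move=> /(_ (enum F)) [h1 [k [r h2]]].
  have e : forall z, Il (enum F) z <-> finI z.
    by move=> z; split=> h f; [apply: h; rewrite mem_enum | move=> _; apply: h].
  split; first exact: subgroup_ext e h1.
  by exists k, r; apply: cov_ext e h2.
elim=> [|f l [IH1 [k [r IH2]]]].
  split; first by split.
  by exists 1, (fun _ => g1) => x; exists 0.
case: (classic (good f)) => gf.
  have [sf [k' [r' cf]]] := hgood gf.
  have e : forall z, (Il l z /\ Sf f z) <-> Il (f :: l) z.
    split; first by move=> [h1 h2] f'; rewrite inE => /orP [/eqP -> //| /h1].
    by move=> h; split; [move=> f' hf'; apply: h; rewrite inE hf' orbT|apply: h; rewrite ?inE ?eqxx].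
  split; first by apply: subgroup_ext e (subgroupI IH1 sf).
  have [r'' c''] := cov_inter IH1 sf IH2 cf.
  by exists (k * k'), r''; apply: cov_ext e c''.
have e : forall z, Il l z <-> Il (f :: l) z.
  split; first by move=> h1 f'; rewrite inE => /orP [/eqP -> //| /h1].
  by move=> h f' hf'; apply: h; rewrite inE hf' orbT.
split; first by apply: subgroup_ext e IH1.
by exists k, r; apply: cov_ext e IH2.
Qed.
End FinInter.

End Covers.


Section StabRep.
Variable Gam : Grp.
Local Notation "x ** y" := (@gmul Gam x y) (at level 40, left associativity).
Local Notation g1 := (gone Gam).
Local Notation gi := (@ginv Gam).

Variables (S : Gam -> Prop) (k : nat) (r : nat -> Gam).
Hypothesis sS : is_subgroup S.
Hypothesis cS : cov S k.+1 r.

Let inhI : inhabited 'I_k.+1 := inhabits ord0.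
Definition canon (y : Gam) : 'I_k.+1 := epsilon inhI (fun i : 'I_k.+1 => eqm S (r i) y).

Lemma canon_spec y : eqm S (r (canon y)) y.
Proof.
rewrite /canon; apply: (epsilon_spec inhI (fun i : 'I_k.+1 => eqm S (r i) y)).
by case: (cS y) => i hi h; exists (Ordinal hi).
Qed.

Lemma canon_eq y y' : eqm S y y' -> canon y = canon y'.
Proof.
move=> h; rewrite /canon; congr (epsilon _ _).
apply: functional_extensionality => i; apply: propositional_extensionality.
split=> h'; first exact: eqm_trans sS h' h.
exact: eqm_trans sS h' (eqm_sym sS h).
Qed.

Lemma canon_eqm y y' : canon y = canon y' -> eqm S y y'.
Proof.
move=> h; have h1 := canon_spec y; have h2 := canon_spec y'.
rewrite h in h1; exact: eqm_trans sS (eqm_sym sS h1) h2.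
Qed.

Lemma canon_idem y : canon (r (canon y)) = canon y.
Proof. exact: canon_eq (canon_spec y). Qed.

Definition rhof (x : Gam) (i : 'I_k.+1) : 'I_k.+1 :=
  if canon (r i) == i then canon (gi x ** r i) else i.

Lemma rhof_inj x : injective (rhof x).
Proof.
move=> i j; rewrite /rhof.
case: eqP => hi; case: eqP => hj.
- move/canon_eqm => /(eqm_mull x); rewrite !gmulKl' => /canon_eq.
  by rewrite hi hj.
- by move=> e; move: hj; rewrite -e canon_idem.
- by move=> e; move: hi; rewrite e canon_idem.
- by [].
Qed.

Definition rho x : {perm 'I_k.+1} := perm (@rhof_inj x).

Lemma rho_hom : is_hom rho.
Proof.
move=> x y; apply/permP => i; rewrite permM !permE /rhof.
case: (boolP (canon (r i) == i)) => hi; last by rewrite (negbTE hi).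
rewrite canon_idem eqxx; apply: canon_eq.
have h := canon_spec (gi x ** r i).
have h2 := eqm_mull (gi y) h.
rewrite ginvM -gmulA'; exact: eqm_sym sS h2.
Qed.

Lemma rho_stab : exists p, forall x, S x <-> rho x p = p.
Proof.
exists (canon g1) => x; rewrite permE /rhof canon_idem eqxx.
have e : canon (gi x ** r (canon g1)) = canon (gi x).
  apply: canon_eq.
  have h := eqm_mull (gi x) (canon_spec g1).
  by rewrite gmul1r in h.
rewrite e; split.
  by move=> hx; apply: canon_eq; rewrite /eqm ginvK gmul1r.
by move/canon_eqm; rewrite /eqm ginvK gmul1r.
Qed.

End StabRep.

Lemma stab_rep (Gam : Grp) (S : Gam -> Prop) k r : is_subgroup S -> cov S k r ->
  exists m, exists rho : Gam -> {perm 'I_m.+1}, is_hom rho /\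
    exists p, forall x, S x <-> rho x p = p.
Proof.
move=> sS cS; have := cov_pos cS; case: k cS => // k cS _.
exists k, (rho sS cS); split; first exact: rho_hom.
exact: rho_stab.
Qed.


Section KM.
Variable Gam : Grp.
Local Notation "x ** y" := (@gmul Gam x y) (at level 40, left associativity).
Local Notation g1 := (gone Gam).
Local Notation gi := (@ginv Gam).
Variables (n : nat) (s : nat -> Gam).
Hypothesis hgen : forall x, Defs.generated (fun g => exists2 i, i < n & g = s i) x.

Lemma hom_gen_eq (T : finGroupType) (f g : Gam -> T) : is_hom f -> is_hom g ->
  (forall i, i < n -> f (s i) = g (s i)) -> forall x, f x = g x.
Proof.
move=> hf hg hs x.
have hS : is_subgroup (fun x => f x = g x).
  split; first by rewrite !hom1.
    by move=> a b ea eb; rewrite hf hg ea eb.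
  by move=> a ea; rewrite !homV // ea.
have hx := hgen x; apply: (hx (fun x => f x = g x) hS).
by move=> z [i hi ->]; apply: hs.
Qed.

Variable M : nat.
Definition KF := ({ffun 'I_n -> {perm 'I_M.+1}} * 'I_M.+1)%type.
Definition KSf (f : KF) (x : Gam) := exists rho : Gam -> {perm 'I_M.+1}, [/\ is_hom rho,
  (forall i (hi : i < n), rho (s i) = f.1 (Ordinal hi)) & rho x f.2 = f.2].
Definition Kgood (f : KF) := is_subgroup (KSf f) /\ fincov (KSf f).
Definition KM := finI Kgood KSf.

Lemma KM_prop : is_subgroup KM /\ fincov KM.
Proof. by apply: finI_prop. Qed.

Lemma KM_sub S k r : is_subgroup S -> cov S k r -> k <= M.+1 -> forall x, KM x -> S x.
Proof.
move=> sS cS hk; have cS' : cov S M.+1 r by apply: cov_mono cS hk.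
have hom := rho_hom sS cS'.
have [p hp] := rho_stab sS cS'.
set rh := rho sS cS' in hom hp.
pose f : KF := ([ffun i : 'I_n => rh (s i)], p).
have e : forall z, S z <-> KSf f z.
  move=> z; split.
    move=> hz; exists rh; split=> //; first by move=> i hi; rewrite ffunE.
    by apply/hp.
  case=> rh' [hom' hs' hz]; apply/hp.
  have ee : rh' z = rh z by apply: hom_gen_eq => // i hi; rewrite hs' ffunE.
  by rewrite -ee; exact: hz.
have gf : Kgood f.
  split; first exact: subgroup_ext e sS.
  by exists M.+1, r; apply: cov_ext e cS'.
by move=> x hx; apply/e; apply: hx.
Qed.

End KM.


Section Mn.
Variable Gam : Grp.
Local Notation "x ** y" := (@gmul Gam x y) (at level 40, left associativity).
Local Notation g1 := (gone Gam).
Local Notation gi := (@ginv Gam).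

Definition fin_k (D N : Gam -> Prop) (k : nat) :=
  [/\ is_subgroup N, (forall x, N x -> D x),
      (forall x n, D x -> N n -> N (x ** n ** gi x)) &
      (exists r : nat -> Gam, (forall i, i < k -> D (r i)) /\
          (forall x, D x -> exists2 i, i < k & exists2 n, N n & x = r i ** n))].

Lemma fin_index_k D N : fin_index_normal D N <-> exists k, fin_k D N k.
Proof.
split; first by case=> h1 h2 h3 [k [r h4]]; exists k; split=> //; exists r.
by case=> k [h1 h2 h3 [r h4]]; split=> //; exists k, r.
Qed.

Definition Mn (D : Gam -> Prop) (n : nat) (x : Gam) :=
  D x /\ forall N, fin_k D N n -> N x.

Variable D : Gam -> Prop.
Hypothesis sD : is_subgroup D.

Lemma Mn_sub n x : Mn D n x -> D x. Proof. by case. Qed.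

Lemma Mn_subgroup n : is_subgroup (Mn D n).
Proof.
split.
- by split; [apply: sg1 sD | move=> N [sN _ _ _]; apply: sg1 sN].
- move=> x y [Dx hx] [Dy hy]; split; first exact (sgM sD Dx Dy).
  by move=> N hN; case: (hN) => sN _ _ _; exact (sgM sN (hx _ hN) (hy _ hN)).
- move=> x [Dx hx]; split; first exact (sgV sD Dx).
  by move=> N hN; case: (hN) => sN _ _ _; exact (sgV sN (hx _ hN)).
Qed.

Lemma Mn_normal n x m : D x -> Mn D n m -> Mn D n (x ** m ** gi x).
Proof.
move=> Dx [Dm hm]; split; first exact (sgM sD (sgM sD Dx Dm) (sgV sD Dx)).
by move=> N hN; case: (hN) => _ _ nN _; apply: nN => //; apply: hm.
Qed.

Lemma fin_k_S N k : fin_k D N k -> fin_k D N k.+1.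
Proof.
case=> h1 h2 h3 [r [hr hc]]; split=> //.
exists (fun i => if i < k then r i else g1); split.
  by move=> i _; case: ifP => hi; [apply: hr | apply: sg1 sD].
move=> x /hc [i hi hx]; exists i; first by apply: leqW.
by rewrite hi.
Qed.

Lemma Mn_mono n x : Mn D n.+1 x -> Mn D n x.
Proof. by case=> Dx h; split=> // N /fin_k_S; apply: h. Qed.

Lemma Mn_mono' n m x : n <= m -> Mn D m x -> Mn D n x.
Proof.
move=> /subnK <-; elim: (m - n) => [//|j IH] h.
by apply: IH; apply: Mn_mono; rewrite -addSn.
Qed.

Lemma Mn_le N k x : fin_k D N k -> Mn D k x -> N x.
Proof. by move=> hN [_ h]; apply: h. Qed.

Lemma Mn_fin (K : Gam -> Prop) n : is_subgroup K -> fincov K ->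
  (forall x, K x -> Mn D n x) -> exists k, fin_k D (Mn D n) k.
Proof.
move=> sK [k [r cK]] hK; exists k; split.
- exact: Mn_subgroup.
- exact: Mn_sub.
- by move=> x m Dx hm; apply: Mn_normal.
pose P i z := D z /\ ((exists w, D w /\ eqm K (r i) w) -> eqm K (r i) z).
have hP : forall i, exists z, P i z.
  move=> i; case: (classic (exists w, D w /\ eqm K (r i) w)) => [[w [Dw hw]]|nw].
    by exists w; split.
  by exists g1; split; [apply: sg1 sD | move=> /nw].
exists (fun i => epsilon (inhG Gam) (P i)); split.
  by move=> i _; case: (epsilon_spec (inhG Gam) (P i) (hP i)).
move=> x Dx; case: (cK x) => i hi hx; exists i => //.
case: (epsilon_spec (inhG Gam) (P i) (hP i)) => Dz hz.
set z := epsilon _ _ in Dz hz *.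
have hz' := hz (ex_intro _ x (conj Dx hx)).
exists (gi z ** x); last by rewrite gmulKl'.
by apply: hK; apply: eqm_trans sK (eqm_sym sK hz') hx.
Qed.

End Mn.

Section CovCompose.
Variable Gam : Grp.
Local Notation "x ** y" := (@gmul Gam x y) (at level 40, left associativity).
Local Notation g1 := (gone Gam).
Local Notation gi := (@ginv Gam).

Lemma cov_compose (D S : Gam -> Prop) c r n :
  cov D c r -> fin_k D S n -> exists r', cov S (c * n) r'.
Proof.
move=> cD [sS SD nS [q [hq cS]]].
case: n hq cS => [|n] hq cS.
  by exfalso; case: (cS _ (SD _ (sg1 sS))).
exists (fun i => r (i %/ n.+1) ** q (i %% n.+1)) => x.
case: (cD x) => a ha hx.
case: (cS _ hx) => b hb [t St et].
exists (a * n.+1 + b).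
  by rewrite -ltn_divLR // ?divnMDl // divn_small // addn0.
rewrite divnMDl // divn_small // addn0 modnMDl modn_small //.
by rewrite /eqm ginvM -gmulA' et gmulKl.
Qed.
End CovCompose.


Section Ciso.
Variable Gam : Grp.
Local Notation "x ** y" := (@gmul Gam x y) (at level 40, left associativity).
Local Notation g1 := (gone Gam).
Local Notation gi := (@ginv Gam).

Definition normal_in (D N : Gam -> Prop) := forall x n, D x -> N n -> N (x ** n ** gi x).

Lemma eqm_mulN (B D : Gam -> Prop) a b c d : is_subgroup D -> is_subgroup B -> normal_in D B -> D c ->
  eqm B a b -> eqm B c d -> eqm B (a ** c) (b ** d).
Proof.
move=> sD sB nB Dc hab hcd; rewrite /eqm.
have -> : gi (a ** c) ** (b ** d) = (gi c ** (gi a ** b) ** gi (gi c)) ** (gi c ** d).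
  by rewrite ginvK ginvM -!gmulA' gmulKl' !gmulA'.
exact (sgM sB (nB _ _ (sgV sD Dc) hab) hcd).
Qed.

Record ciso (D1 D2 A1 A2 : Gam -> Prop) (R : Gam -> Gam -> Prop) : Prop := Ciso {
  ci_dom : forall x y, R x y -> D1 x /\ D2 y;
  ci_tot : forall x, D1 x -> exists y, R x y;
  ci_sur : forall y, D2 y -> exists x, R x y;
  ci_wdy : forall x y y', R x y -> (R x y' <-> eqm A2 y y');
  ci_wdx : forall x x' y, R x y -> (R x' y <-> eqm A1 x x');
  ci_mul : forall x y x' y', R x y -> R x' y' -> R (x ** x') (y ** y')
}.
Arguments ci_dom {D1 D2 A1 A2 R} _ {x y}.
Arguments ci_tot {D1 D2 A1 A2 R} _ {x}.
Arguments ci_sur {D1 D2 A1 A2 R} _ {y}.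
Arguments ci_wdy {D1 D2 A1 A2 R} _ {x y y'}.
Arguments ci_wdx {D1 D2 A1 A2 R} _ {x x' y}.
Arguments ci_mul {D1 D2 A1 A2 R} _ {x y x' y'}.


Section CisoProps.
Variables (D1 D2 A1 A2 : Gam -> Prop) (R : Gam -> Gam -> Prop).
Hypotheses (sD1 : is_subgroup D1) (sD2 : is_subgroup D2)
  (sA1 : is_subgroup A1) (sA2 : is_subgroup A2).
Hypothesis hR : ciso D1 D2 A1 A2 R.

Lemma ci_1 : R g1 g1.
Proof.
case: (ci_tot hR (sg1 sD1)) => u hu.
have h := ci_mul hR hu hu; rewrite gmul1 in h.
have /(ci_wdy hR hu) e := h.
apply/(ci_wdy hR hu); rewrite /eqm in e *.
by rewrite gmulKl in e; rewrite gmul1r; exact (sgV sA2 e).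
Qed.

Lemma ci_V x y : R x y -> R (gi x) (gi y).
Proof.
move=> hxy; case: (ci_dom hR hxy) => Dx _.
case: (ci_tot hR (sgV sD1 Dx)) => w hw.
have h := ci_mul hR hxy hw; rewrite gmulV' in h.
have /(ci_wdy hR ci_1) e := h.
apply/(ci_wdy hR hw); rewrite /eqm in e *.
rewrite ginv1 gmul1 in e; rewrite -ginvM; exact (sgV sA2 e).
Qed.

Lemma ci_T : ciso D2 D1 A2 A1 (fun y x => R x y).
Proof.
split.
- by move=> y x /(ci_dom hR) [].
- by move=> y hy; apply: (ci_sur hR hy).
- by move=> x hx; apply: (ci_tot hR hx).
- by move=> y x x' h; apply: (ci_wdx hR h).
- by move=> y y' x h; apply: (ci_wdy hR h).
- by move=> y x y' x' h h'; apply: (ci_mul hR h h').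
Qed.

Lemma ci_div x y x' y' : R x y -> R x' y' -> R (gi x ** x') (gi y ** y').
Proof. by move=> h h'; apply: (ci_mul hR) => //; apply: ci_V. Qed.

End CisoProps.

Section Preserve.
Variables (D1 D2 A1 A2 : Gam -> Prop) (R : Gam -> Gam -> Prop) (n : nat).
Hypotheses (sD1 : is_subgroup D1) (sD2 : is_subgroup D2)
  (sA1 : is_subgroup A1) (sA2 : is_subgroup A2).
Hypothesis hR : ciso D1 D2 A1 A2 R.
Hypothesis hA2 : forall x, A2 x -> Mn D2 n x.

Lemma ci_pres x y : R x y -> Mn D1 n x -> Mn D2 n y.
Proof.
move=> hxy [D1x hx]; have [_ D2y] := ci_dom hR hxy.
split=> // N hN.
pose P x' := exists y', R x' y' /\ N y'.
have hP : fin_k D1 P n.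
  case: hN => sN ND nN [q [hq cN]].
  split.
  - split.
    + exists g1; split; [exact (ci_1 sD1 sA2 hR) | exact (sg1 sN)].
    + move=> a b [ya [ha Na]] [yb [hb Nb]]; exists (ya ** yb); split.
        exact: (ci_mul hR).
      exact (sgM sN Na Nb).
    + move=> a [ya [ha Na]]; exists (gi ya); split; first exact (ci_V sD1 sA2 hR ha).
      exact (sgV sN Na).
  - by move=> a [ya [ha _]]; case: (ci_dom hR ha).
  - move=> d p D1d [yp [hp Np]].
    case: (ci_tot hR D1d) => e he.
    exists (e ** yp ** gi e); split.
      by apply: (ci_mul hR); [apply: (ci_mul hR) | exact (ci_V sD1 sA2 hR he)].
    by apply: nN => //; case: (ci_dom hR he).
  pose Q j x := R x (q j).
  have hQ : forall j, j < n -> exists x, Q j x.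
    by move=> j hj; apply: (ci_sur hR); apply: hq.
  exists (fun j => epsilon (inhG Gam) (Q j)); split.
    move=> j hj; have := epsilon_spec (inhG Gam) (Q j) (hQ j hj).
    by move=> /(ci_dom hR) [].
  move=> x0 Dx; case: (ci_tot hR Dx) => y' hy'.
  have [_ D2y'] := ci_dom hR hy'.
  case: (cN _ D2y') => j hj [t Nt et].
  exists j => //.
  have hpj := epsilon_spec (inhG Gam) (Q j) (hQ j hj).
  set pj := epsilon _ _ in hpj *.
  exists (gi pj ** x0); last by rewrite gmulKl'.
  exists t; split=> //.
  have := ci_div sD1 sA2 hR hpj hy'; rewrite et gmulKl //.
case: (hx P hP) => y' [h1 h2].
have /(ci_wdy hR h1) e := hxy.
have := Mn_le hN (hA2 e).
case: hN => sN _ _ _ h3.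
by have := sgM sN h2 h3; rewrite gmulKl'.
Qed.
End Preserve.

Definition push (B1 B2 : Gam -> Prop) (R : Gam -> Gam -> Prop) x y :=
  exists x' y', [/\ R x' y', eqm B1 x' x & eqm B2 y' y].

Section Push.
Variables (D1 D2 A1 A2 B1 B2 : Gam -> Prop) (R : Gam -> Gam -> Prop).
Hypotheses (sD1 : is_subgroup D1) (sD2 : is_subgroup D2)
  (sA1 : is_subgroup A1) (sA2 : is_subgroup A2)
  (sB1 : is_subgroup B1) (sB2 : is_subgroup B2).
Hypotheses (BD1 : forall x, B1 x -> D1 x) (BD2 : forall x, B2 x -> D2 x).
Hypotheses (nB1 : normal_in D1 B1) (nB2 : normal_in D2 B2).
Hypotheses (AB1 : forall x, A1 x -> B1 x) (AB2 : forall x, A2 x -> B2 x).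
Hypothesis hR : ciso D1 D2 A1 A2 R.
Hypothesis hpres : forall x y, R x y -> (B1 x <-> B2 y).

Lemma push_ge x y : R x y -> push B1 B2 R x y.
Proof. by move=> h; exists x, y; split=> //; apply: eqm_refl. Qed.

Lemma eqm_D (D B : Gam -> Prop) x x' : is_subgroup D -> (forall z, B z -> D z) ->
  D x -> eqm B x x' -> D x'.
Proof.
by move=> sD BD Dx /BD h; have := sgM sD Dx h; rewrite gmulKl'.
Qed.

Lemma push_ciso : ciso D1 D2 B1 B2 (push B1 B2 R).
Proof.
split.
- move=> x y [x' [y' [h1 h2 h3]]]; have [D1x' D2y'] := ci_dom hR h1.
  by split; [apply: eqm_D sD1 BD1 D1x' h2 | apply: eqm_D sD2 BD2 D2y' h3].
- by move=> x /(ci_tot hR) [y h]; exists y; apply: push_ge.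
- by move=> y /(ci_sur hR) [x h]; exists x; apply: push_ge.
- move=> x y y' [x1 [y1 [h1 hx1 hy1]]]; split.
    case=> x2 [y2 [h2 hx2 hy2]].
    have e1 := ci_div sD1 sA2 hR h1 h2.
    have /(hpres e1) e2 : B1 (gi x1 ** x2) by apply: eqm_trans sB1 hx1 (eqm_sym sB1 hx2).
    apply: eqm_trans sB2 (eqm_sym sB2 hy1) _.
    exact: eqm_trans sB2 e2 hy2.
  move=> e; exists x1, y1; split=> //; exact: eqm_trans sB2 hy1 e.
- move=> x x' y [x1 [y1 [h1 hx1 hy1]]]; split.
    case=> x2 [y2 [h2 hx2 hy2]].
    have e1 := ci_div sD1 sA2 hR h1 h2.
    have /(hpres e1) e2 : B2 (gi y1 ** y2) by apply: eqm_trans sB2 hy1 (eqm_sym sB2 hy2).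
    apply: eqm_trans sB1 (eqm_sym sB1 hx1) _.
    exact: eqm_trans sB1 e2 hx2.
  move=> e; exists x1, y1; split=> //; exact: eqm_trans sB1 hx1 e.
- move=> x y x' y' [x1 [y1 [h1 hx1 hy1]]] [x2 [y2 [h2 hx2 hy2]]].
  exists (x1 ** x2), (y1 ** y2); split; first exact: (ci_mul hR).
    by apply: eqm_mulN sD1 sB1 nB1 _ hx1 hx2; case: (ci_dom hR h2).
  by apply: eqm_mulN sD2 sB2 nB2 _ hy1 hy2; case: (ci_dom hR h2).
Qed.
End Push.

End Ciso.
Arguments ci_dom {Gam D1 D2 A1 A2 R} _ {x y}.
Arguments ci_tot {Gam D1 D2 A1 A2 R} _ {x}.
Arguments ci_sur {Gam D1 D2 A1 A2 R} _ {y}.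
Arguments ci_wdy {Gam D1 D2 A1 A2 R} _ {x y y'}.
Arguments ci_wdx {Gam D1 D2 A1 A2 R} _ {x x' y}.
Arguments ci_mul {Gam D1 D2 A1 A2 R} _ {x y x' y'}.


Section Konig.
Variables (X : Type) (V : nat -> X -> Prop) (P : nat -> X -> X).
Hypothesis h1 : forall n m x, n <= m -> V m x -> V n (P n x).
Hypothesis h2 : forall n m x, n <= m -> P n (P m x) = P n x.
Hypothesis h3 : forall n, exists x, V n x.
Hypothesis h4 : forall n, exists L : list X, forall x, V n x -> List.In x L.

Lemma foldr_max_ge (f : X -> nat) (L : list X) n x : List.In x L -> f x <= foldr maxn n (map f L).
Proof.
elim: L => //= a l IH [-> | /IH h]; first by rewrite leq_maxl.
by apply: leq_trans h _; rewrite leq_maxr.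
Qed.

Lemma foldr_max_ge0 (l : seq nat) n : n <= foldr maxn n l.
Proof. by elim: l => //= a l IH; rewrite leq_max IH orbT. Qed.

Definition Ext n x := V n x /\ forall m, n <= m -> exists y, V m y /\ P n y = x.

Lemma KL n (T : X -> Prop) : (forall m, n <= m -> exists y, V m y /\ T (P n y)) ->
  exists x, [/\ V n x, T x & Ext n x].
Proof.
move=> hT; apply: NNPP => hno.
have bad : forall x, V n x -> T x -> exists m, n <= m /\ forall y, V m y -> P n y <> x.
  move=> x Vx Tx; apply: NNPP => hb; apply: hno; exists x; split=> //; split=> // m hm.
  apply: NNPP => hc; apply: hb; exists m; split=> // y Vy e; apply: hc; by exists y.
pose mx x := epsilon (inhabits 0) (fun m => n <= m /\ forall y, V m y -> P n y <> x).
have hmx : forall x, V n x -> T x -> n <= mx x /\ forall y, V (mx x) y -> P n y <> x.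
  move=> x Vx Tx; exact (epsilon_spec _ _ (bad x Vx Tx)).
case: (h4 n) => L hL.
pose M := foldr maxn n (map mx L).
have hM : forall x, List.In x L -> mx x <= M by move=> x hx; apply: foldr_max_ge.
have nM : n <= M by apply: foldr_max_ge0.
case: (hT M nM) => y [VMy Ty].
set x := P n y in Ty.
have Vx : V n x by apply: h1 nM VMy.
have [hn hb] := hmx x Vx Ty.
apply: (hb (P (mx x) y)).
  by apply: h1 (hM x (hL x Vx)) VMy.
by rewrite (h2 _ hn).
Qed.

Lemma Ext_ne n : exists x, Ext n x.
Proof.
case: (@KL n (fun _ => True)) => [m hm|x [_ _ h]]; last by exists x.
by case: (h3 m) => y hy; exists y.
Qed.

Lemma Ext_step n x : Ext n x -> exists x', Ext n.+1 x' /\ P n x' = x.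
Proof.
move=> [Vx hx].
case: (@KL n.+1 (fun z => P n z = x)) => [m hm|x' [_ e h]]; last by exists x'.
case: (hx m (ltnW hm)) => y [Vy ey]; exists y; split=> //.
by rewrite (h2 _ (leqnSn n)).
Qed.

Fixpoint kseq (n : nat) : {x | Ext n x} :=
  match n with
  | 0 => constructive_indefinite_description _ (Ext_ne 0)
  | n'.+1 => let (x, hx) := kseq n' in
     let (x', hx') := constructive_indefinite_description _ (Ext_step hx) in
     exist _ x' (proj1 hx')
  end.

Lemma konig : exists s : nat -> X, forall n, V n (s n) /\ P n (s n.+1) = s n.
Proof.
exists (fun n => proj1_sig (kseq n)) => n; split.
  by case: (proj2_sig (kseq n)).
rewrite /=; case: (kseq n) => x hx /=.
by case: (constructive_indefinite_description _ _) => x' [] /=.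
Qed.
End Konig.


Lemma in_In (T : eqType) (x : T) (s : seq T) : x \in s -> List.In x s.
Proof. by elim: s => //= a s IH; rewrite inE => /orP [/eqP -> | /IH]; [left | right]. Qed.

Section Levels.
Variable Gam : Grp.
Local Notation "x ** y" := (@gmul Gam x y) (at level 40, left associativity).
Local Notation g1 := (gone Gam).
Local Notation gi := (@ginv Gam).

Variables D1 D2 : Gam -> Prop.
Hypotheses (sD1 : is_subgroup D1) (sD2 : is_subgroup D2).
Hypothesis hfin1 : forall n, exists k, fin_k D1 (Mn D1 n) k.
Hypothesis hfin2 : forall n, exists k, fin_k D2 (Mn D2 n) k.
Hypothesis hne : forall n, exists R, ciso D1 D2 (Mn D1 n) (Mn D2 n) R.

Definition LV n R := ciso D1 D2 (Mn D1 n) (Mn D2 n) R.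
Definition LP n R := push (Mn D1 n) (Mn D2 n) R.

Lemma Mn_le_sub (D : Gam -> Prop) n m x : is_subgroup D -> n <= m -> Mn D m x -> Mn D n x.
Proof. by move=> sD; apply: (Mn_mono' sD). Qed.

Lemma LV_push n m R : n <= m -> LV m R -> LV n (LP n R).
Proof.
move=> hnm hR.
have sM1 := Mn_subgroup sD1; have sM2 := Mn_subgroup sD2.
apply: (push_ciso sD1 sD2 (sM2 m) (sM1 n) (sM2 n)).
- exact: Mn_sub.
- exact: Mn_sub.
- by move=> x k Dx hk; apply: Mn_normal.
- by move=> x k Dx hk; apply: Mn_normal.
- exact: hR.
move=> x y hxy; split.
  apply: (ci_pres sD1 (sM2 m) hR) => //.
  by move=> z; apply: Mn_le_sub sD2 hnm.
apply: (ci_pres sD2 (sM1 m) (ci_T hR)) => //.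
by move=> z; apply: Mn_le_sub sD1 hnm.
Qed.

Lemma LP_LP n m R : n <= m -> LP n (LP m R) = LP n R.
Proof.
move=> hnm.
have sM1 := Mn_subgroup sD1; have sM2 := Mn_subgroup sD2.
apply: functional_extensionality => x; apply: functional_extensionality => y.
apply: propositional_extensionality; split.
  case=> x1 [y1 [[x2 [y2 [h2 hx2 hy2]]] hx1 hy1]].
  exists x2, y2; split=> //.
    apply: eqm_trans (sM1 n) _ hx1; apply: eqm_sub hx2 => z; exact: Mn_le_sub sD1 hnm.
  apply: eqm_trans (sM2 n) _ hy1; apply: eqm_sub hy2 => z; exact: Mn_le_sub sD2 hnm.
case=> x1 [y1 [h1 hx1 hy1]].
exists x1, y1; split=> //.
by exists x1, y1; split=> //; apply: eqm_refl.
Qed.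

Lemma LV_finite n : exists L : list (Gam -> Gam -> Prop), forall R, LV n R -> List.In R L.
Proof.
have [k1 [_ _ _ [u [hu cu]]]] := hfin1 n.
have [k2 [_ _ _ [v [hv cv]]]] := hfin2 n.
have sM1 := Mn_subgroup sD1 n; have sM2 := Mn_subgroup sD2 n.
case: k2 hv cv => [|k2] hv cv.
  by case: (cv _ (sg1 sD2)).
pose Rof (c : {ffun 'I_k1 -> 'I_k2.+1}) x y :=
  exists i : 'I_k1, eqm (Mn D1 n) (u i) x /\ eqm (Mn D2 n) (v (c i)) y.
exists (map Rof (enum {ffun 'I_k1 -> 'I_k2.+1})) => R hR.
have inh : inhabited 'I_k2.+1 := inhabits ord0.
pose c := [ffun i : 'I_k1 => epsilon inh (fun j : 'I_k2.+1 => R (u i) (v j))].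
have hc : forall i : 'I_k1, R (u i) (v (c i)).
  move=> i; rewrite ffunE; apply: (epsilon_spec inh (fun j : 'I_k2.+1 => R (u i) (v j))).
  case: (ci_tot hR (hu i (ltn_ord i))) => y hy.
  have [_ D2y] := ci_dom hR hy.
  case: (cv _ D2y) => j hj [t Mt et].
  exists (Ordinal hj) => /=; apply: (proj2 (ci_wdy hR hy)).
  by rewrite /eqm et ginvM -gmulA' gmulV gmul1r; exact (sgV sM2 Mt).
have -> : R = Rof c.
  apply: functional_extensionality => x; apply: functional_extensionality => y.
  apply: propositional_extensionality; split.
    move=> hxy; have [D1x _] := ci_dom hR hxy.
    case: (cu _ D1x) => i hi [t Mt et].
    have ei : eqm (Mn D1 n) (u (Ordinal hi)) x by rewrite /eqm et gmulKl.
    exists (Ordinal hi); split=> //.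
    have h := hc (Ordinal hi).
    have h' := proj2 (ci_wdx hR h) ei.
    exact: (proj1 (ci_wdy hR h') hxy).
  case=> i [hx hy].
  have h := hc i.
  have h' := proj2 (ci_wdx hR h) hx.
  exact: (proj2 (ci_wdy hR h') hy).
apply: List.in_map; apply: in_In; exact: mem_enum.
Qed.

Lemma levels : exists Rs : nat -> Gam -> Gam -> Prop,
  forall n, LV n (Rs n) /\ LP n (Rs n.+1) = Rs n.
Proof.
apply: (@konig _ LV LP).
- by move=> n m R; apply: LV_push.
- by move=> n m R; apply: LP_LP.
- exact: hne.
- exact: LV_finite.
Qed.

End Levels.


Section FinsProps.
Variable Gam : Grp.
Local Notation "x ** y" := (@gmul Gam x y) (at level 40, left associativity).
Local Notation g1 := (gone Gam).
Local Notation gi := (@ginv Gam).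
Variable D : Gam -> Prop.
Hypothesis sD : is_subgroup D.

Lemma fins_k (N : FINS D) : exists k, fin_k D (sval N) k.
Proof. by apply/fin_index_k; apply: (svalP N). Qed.
Lemma fins_sub (N : FINS D) : is_subgroup (sval N).
Proof. by case: (fins_k N) => k []. Qed.
Lemma fins_inD (N : FINS D) x : sval N x -> D x.
Proof. by case: (fins_k N) => k [] _ h _ _; apply: h. Qed.
Lemma fins_normal (N : FINS D) : normal_in D (sval N).
Proof. by case: (fins_k N) => k []. Qed.
Lemma fins_Mn (N : FINS D) : exists k, forall z, Mn D k z -> sval N z.
Proof. by case: (fins_k N) => k hk; exists k => z; apply: Mn_le. Qed.

Lemma lcoset_eqm (N : Gam -> Prop) x y : Defs.lcoset N x y <-> eqm N x y.
Proof.
split; first by case=> n hn ->; rewrite /eqm gmulKl.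
by move=> h; exists (gi x ** y) => //; rewrite gmulKl'.
Qed.

Variable c : completion D.
Lemma c_ne (N : FINS D) : exists x, sval c N x.
Proof.
case: (proj1 (svalP c) N) => x Dx hx; exists x; apply/hx/lcoset_eqm.
exact: eqm_refl (fins_sub N).
Qed.
Lemma c_char (N : FINS D) x : sval c N x -> forall z, sval c N z <-> eqm (sval N) x z.
Proof.
case: (proj1 (svalP c) N) => x0 Dx0 hx0 hx z.
have sN := fins_sub N.
move/hx0/lcoset_eqm: hx => e0.
split; first by move/hx0/lcoset_eqm => e1; apply: eqm_trans sN (eqm_sym sN e0) e1.
by move=> e1; apply/hx0/lcoset_eqm; apply: eqm_trans sN e0 e1.
Qed.
Lemma c_inD (N : FINS D) x : sval c N x -> D x.
Proof.
case: (proj1 (svalP c) N) => x0 Dx0 hx0 /hx0 [n hn ->].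
exact (sgM sD Dx0 (fins_inD hn)).
Qed.
Lemma c_compat (M N : FINS D) : (forall y, sval M y -> sval N y) ->
  forall y, sval c M y -> sval c N y.
Proof. exact: (proj2 (svalP c)). Qed.
End FinsProps.

Lemma compl_ext (Gam : Grp) (D : Gam -> Prop) (c d : completion D) :
  (forall N y, sval c N y <-> sval d N y) -> c = d.
Proof.
case: c => c hc; case: d => d hd /= h.
have e : c = d.
  apply: functional_extensionality => N; apply: functional_extensionality => y.
  by apply: propositional_extensionality.
subst d; f_equal; apply: proof_irrelevance.
Qed.

Definition MF (Gam : Grp) (D : Gam -> Prop) (hf : forall n, exists k, fin_k D (Mn D n) k)
  (n : nat) : FINS D :=
  exist _ (Mn D n) (proj2 (fin_index_k D (Mn D n)) (hf n)).

Section Fmap.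
Variable Gam : Grp.
Local Notation "x ** y" := (@gmul Gam x y) (at level 40, left associativity).
Local Notation g1 := (gone Gam).
Local Notation gi := (@ginv Gam).
Variables D1 D2 : Gam -> Prop.
Hypotheses (sD1 : is_subgroup D1) (sD2 : is_subgroup D2).
Hypothesis hfin1 : forall n, exists k, fin_k D1 (Mn D1 n) k.
Variable Rs : nat -> Gam -> Gam -> Prop.
Hypothesis hRs : forall n, ciso D1 D2 (Mn D1 n) (Mn D2 n) (Rs n).
Hypothesis hmono : forall n m x y, n <= m -> Rs m x y -> Rs n x y.

Definition Fc (c : completion D1) (N2 : FINS D2) (y : Gam) :=
  exists n, (forall z, Mn D2 n z -> sval N2 z) /\
    exists x y', [/\ sval c (MF hfin1 n) x, Rs n x y' & eqm (sval N2) y' y].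

Lemma Fc_ML (c : completion D1) (N2 : FINS D2) n x y : (forall z, Mn D2 n z -> sval N2 z) ->
  sval c (MF hfin1 n) x -> Rs n x y -> forall z, Fc c N2 z <-> eqm (sval N2) y z.
Proof.
move=> hN hx hxy z; have sN := fins_sub N2.
split; last by move=> e; exists n; split=> //; exists x, y; split.
case=> n' [hN' [x' [y' [hx' hxy' e]]]].
pose m := maxn n n'.
case: (c_ne c (MF hfin1 m)) => x'' hx''.
have D1x'' := c_inD sD1 hx''.
case: (ci_tot (hRs m) D1x'') => y'' hy''.
have Mmn : forall z, Mn D1 m z -> Mn D1 n z by move=> w; apply: Mn_le_sub sD1 (leq_maxl _ _).
have Mmn' : forall z, Mn D1 m z -> Mn D1 n' z by move=> w; apply: Mn_le_sub sD1 (leq_maxr _ _).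
have hx1 : sval c (MF hfin1 n) x'' :=  (c_compat (M:=MF hfin1 m) (N:=MF hfin1 n) Mmn hx'').
have hx2 : sval c (MF hfin1 n') x'' :=  (c_compat (M:=MF hfin1 m) (N:=MF hfin1 n') Mmn' hx'').
have r1 : Rs n x'' y'' by apply: hmono (leq_maxl _ _) hy''.
have r2 : Rs n' x'' y'' by apply: hmono (leq_maxr _ _) hy''.
have e1 : eqm (sval N2) y y''.
  have := proj1 (c_char hx x'') hx1 => /(proj2 (ci_wdx (hRs n) hxy)) h1.
  by apply: eqm_sub hN _; apply: (proj1 (ci_wdy (hRs n) h1)).
have e2 : eqm (sval N2) y' y''.
  have := proj1 (c_char hx' x'') hx2 => /(proj2 (ci_wdx (hRs n') hxy')) h1.
  by apply: eqm_sub hN' _; apply: (proj1 (ci_wdy (hRs n') h1)).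
exact: eqm_trans sN (eqm_trans sN e1 (eqm_sym sN e2)) e.
Qed.

Lemma Fc_start (N2 : FINS D2) (c : completion D1) : exists n x y, [/\ (forall z, Mn D2 n z -> sval N2 z),
  sval c (MF hfin1 n) x & Rs n x y].
Proof.
case: (fins_Mn N2) => n hn; case: (c_ne c (MF hfin1 n)) => x hx.
case: (ci_tot (hRs n) (c_inD sD1 hx)) => y hy.
by exists n, x, y; split.
Qed.

Lemma Fc_elt (c : completion D1) : is_compl_elt (Fc c).
Proof.
split.
  move=> N2; case: (Fc_start N2 c) => n [x [y [hn hx hxy]]].
  exists y; first by case: (ci_dom (hRs n) hxy).
  move=> z; rewrite (Fc_ML hn hx hxy); split; by move/lcoset_eqm.
move=> M N hMN y [n [hn [x [y' [h1 h2 h3]]]]].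
exists n; split; first by move=> z /hn /hMN.
by exists x, y'; split=> //; apply: eqm_sub hMN h3.
Qed.

Definition Fmap (c : completion D1) : completion D2 := exist _ (Fc c) (Fc_elt c).

Lemma Fmap_ML (c : completion D1) (N2 : FINS D2) n x y : (forall z, Mn D2 n z -> sval N2 z) ->
  sval c (MF hfin1 n) x -> Rs n x y -> forall z, sval (Fmap c) N2 z <-> eqm (sval N2) y z.
Proof. exact: Fc_ML. Qed.

Lemma Fmap_hom (c d e : completion D1) : compl_prod c d e -> compl_prod (Fmap c) (Fmap d) (Fmap e).
Proof.
move=> hp N2 z.
case: (fins_Mn N2) => n hn.
have sN := fins_sub N2.
case: (c_ne c (MF hfin1 n)) => xc hxc.
case: (c_ne d (MF hfin1 n)) => xd hxd.
case: (ci_tot (hRs n) (c_inD sD1 hxc)) => yc hyc.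
case: (ci_tot (hRs n) (c_inD sD1 hxd)) => yd hyd.
have hxe : sval e (MF hfin1 n) (xc ** xd) by apply/hp; exists xc, xd.
have hye := ci_mul (hRs n) hyc hyd.
rewrite (Fmap_ML hn hxe hye); split.
  move=> h; exists yc, (gi yc ** z); split.
  - by apply/(Fmap_ML hn hxc hyc); apply: eqm_refl.
  - by apply/(Fmap_ML hn hxd hyd); rewrite /eqm gmulA' -ginvM.
  - by rewrite gmulKl'.
case=> a [b [ha hb ->]].
move/(Fmap_ML hn hxc hyc): ha => ha; move/(Fmap_ML hn hxd hyd): hb => hb.
have D2yd : D2 yd by case: (ci_dom (hRs n) hyd).
have nN : normal_in D2 (sval N2) by move=> ? ? ? ?; apply: fins_normal.
exact (eqm_mulN sD2 sN nN D2yd ha hb).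
Qed.

Lemma Fmap_cont : compl_continuous Fmap.
Proof.
move=> c N2; case: (Fc_start N2 c) => n [x [y [hn hx hxy]]].
exists (MF hfin1 n) => d hd z.
have hx' : sval d (MF hfin1 n) x by apply/hd.
by rewrite (Fmap_ML hn hx hxy) (Fmap_ML hn hx' hxy).
Qed.

End Fmap.


Section Inv.
Variable Gam : Grp.
Variables D1 D2 : Gam -> Prop.
Hypotheses (sD1 : is_subgroup D1) (sD2 : is_subgroup D2).
Hypothesis hfin1 : forall n, exists k, fin_k D1 (Mn D1 n) k.
Hypothesis hfin2 : forall n, exists k, fin_k D2 (Mn D2 n) k.
Variable Rs : nat -> Gam -> Gam -> Prop.
Hypothesis hRs : forall n, ciso D1 D2 (Mn D1 n) (Mn D2 n) (Rs n).
Hypothesis hmono : forall n m x y, n <= m -> Rs m x y -> Rs n x y.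
Variable RsT : nat -> Gam -> Gam -> Prop.
Hypothesis eT : forall n x y, RsT n y x <-> Rs n x y.
Hypothesis hRsT : forall n, ciso D2 D1 (Mn D2 n) (Mn D1 n) (RsT n).
Hypothesis hmonoT : forall n m x y, n <= m -> RsT m x y -> RsT n x y.

Lemma Fmap_inv (c : completion D1) :
  Fmap sD2 hfin2 hRsT hmonoT (Fmap sD1 hfin1 hRs hmono c) = c.
Proof.
apply: compl_ext => N1 z.
case: (fins_Mn N1) => k hk.
case: (c_ne c (MF hfin1 k)) => x hx.
case: (ci_tot (hRs k) (c_inD sD1 hx)) => y hxy.
have hfy : sval (Fmap sD1 hfin1 hRs hmono c) (MF hfin2 k) y.
  apply/(Fmap_ML sD1 hRs hmono (N2 := MF hfin2 k) (fun w h => h) hx hxy).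
  exact: eqm_refl (Mn_subgroup sD2 k).
have hyx : RsT k y x by apply/eT.
rewrite (Fmap_ML sD2 hRsT hmonoT hk hfy hyx).
have hcx : sval c N1 x.
  exact (c_compat (M:=MF hfin1 k) (N:=N1) hk hx).
by rewrite (c_char hcx).
Qed.
End Inv.

Lemma iso_from_levels (Gam : Grp) (D1 D2 : Gam -> Prop) (sD1 : is_subgroup D1) (sD2 : is_subgroup D2)
  (hfin1 : forall n, exists k, fin_k D1 (Mn D1 n) k)
  (hfin2 : forall n, exists k, fin_k D2 (Mn D2 n) k)
  (Rs : nat -> Gam -> Gam -> Prop)
  (hRs : forall n, ciso D1 D2 (Mn D1 n) (Mn D2 n) (Rs n))
  (hmono : forall n m x y, n <= m -> Rs m x y -> Rs n x y) :
  compl_isomorphic D1 D2.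
Proof.
pose RsT n y x := Rs n x y.
have hRsT : forall n, ciso D2 D1 (Mn D2 n) (Mn D1 n) (RsT n) by move=> n; apply: ci_T.
have hmonoT : forall n m x y, n <= m -> RsT m x y -> RsT n x y by move=> n m x y h; apply: hmono.
pose RsTT n x y := RsT n y x.
have hRsTT : forall n, ciso D1 D2 (Mn D1 n) (Mn D2 n) (RsTT n) by move=> n; apply: ci_T.
have hmonoTT : forall n m x y, n <= m -> RsTT m x y -> RsTT n x y by move=> n m x y h; apply: hmono.
exists (Fmap sD1 hfin1 hRs hmono), (Fmap sD2 hfin2 hRsT hmonoT); split.
- by move=> c; exact: (Fmap_inv sD1 sD2 hfin1 hfin2 hRs hmono (RsT := RsT) (fun n x y => iff_refl _) hRsT hmonoT c).
- move=> d.
  have -> : Fmap sD1 hfin1 hRs hmono (Fmap sD2 hfin2 hRsT hmonoT d) =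
            Fmap sD1 hfin1 hRsTT hmonoTT (Fmap sD2 hfin2 hRsT hmonoT d).
    by apply: compl_ext.
  exact: (Fmap_inv sD2 sD1 hfin2 hfin1 hRsT hmonoT (RsT := RsTT) (fun n x y => iff_refl _) hRsTT hmonoTT d).
- by move=> c d e; apply: Fmap_hom.
- exact: Fmap_cont.
- exact: Fmap_cont.
Qed.


Section Setup.
Variable Gam : Grp.
Local Notation "x ** y" := (@gmul Gam x y) (at level 40, left associativity).
Local Notation g1 := (gone Gam).
Local Notation gi := (@ginv Gam).
Variables (gT : finGroupType) (phi : Gam -> gT).
Hypothesis phiM : is_hom phi.
Hypothesis phiS : forall g : gT, exists x, phi x = g.

Definition Del (G : {group gT}) (x : Gam) := phi x \in G.

Lemma Del_sub (G : {group gT}) : is_subgroup (Del G).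
Proof.
split; rewrite /Del.
- by rewrite hom1 // group1.
- by move=> x y hx hy; rewrite phiM groupM.
- by move=> x hx; rewrite homV // groupV.
Qed.

Definition pre (g : gT) : Gam := epsilon (inhG Gam) (fun x => phi x = g).
Lemma preE g : phi (pre g) = g.
Proof. by apply: (epsilon_spec (inhG Gam) (fun x => phi x = g)); apply: phiS. Qed.

Lemma Del_cov (G : {group gT}) : cov (Del G) #|gT| (fun i => pre (nth 1%g (enum gT) i)).
Proof.
move=> x; exists (index (phi x) (enum gT)).
  by rewrite cardE index_mem mem_enum.
rewrite /eqm /Del phiM homV // preE nth_index ?mem_enum //.
by rewrite mulVg group1.
Qed.

Variables (n : nat) (s : nat -> Gam).
Hypothesis hgen : forall x, Defs.generated (fun g => exists2 i, i < n & g = s i) x.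

Lemma KM_Mn (G : {group gT}) k x : KM n s (#|gT| * k.+1) x -> Mn (Del G) k x.
Proof.
move=> hx; split.
  apply: (KM_sub hgen (Del_sub G) (Del_cov G)) hx.
  by rewrite mulnS -addnS leq_addr.
move=> N hN.
have [r' cN] := cov_compose (Del_cov G) hN.
case: hN => sN _ _ _.
apply: (KM_sub hgen sN cN) hx.
by rewrite mulnS leqW // leq_addl.
Qed.

Lemma hfin_Del (G : {group gT}) : forall k, exists m, fin_k (Del G) (Mn (Del G) k) m.
Proof.
move=> k; have [sK fK] := KM_prop n s (#|gT| * k.+1).
apply: (Mn_fin (Del_sub G) sK fK).
exact: KM_Mn.
Qed.

End Setup.


Definition pb (P : Prop) : bool := if excluded_middle_informative P then true else false.
Lemma pbP (P : Prop) : pb P <-> P.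
Proof. by rewrite /pb; case: excluded_middle_informative. Qed.

Section Fin.
Variable Gam : Grp.
Local Notation "x ** y" := (@gmul Gam x y) (at level 40, left associativity).
Local Notation g1 := (gone Gam).
Local Notation gi := (@ginv Gam).
Variables (gT : finGroupType) (phi : Gam -> gT).
Hypothesis phiM : is_hom phi.
Hypothesis phiS : forall g : gT, exists x, phi x = g.
Variables (G1 G2 : {group gT}).
Variables (n : nat) (s : nat -> Gam).
Hypothesis hgen : forall x, Defs.generated (fun g => exists2 i, i < n & g = s i) x.
Hypothesis Hall : forall (hT : finGroupType) (psi : Gam -> hT)
  (theta : {morphism [set: hT] >-> gT}), is_hom psi -> (forall x, phi x = theta (psi x)) ->
  (theta @*^-1 G1)%G \isog (theta @*^-1 G2)%G.

Lemma hne k : exists R, ciso (Del phi G1) (Del phi G2) (Mn (Del phi G1) k) (Mn (Del phi G2) k) R.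
Proof.
have [sK [kk [r cK]]] := KM_prop n s (#|gT| * k.+1).
have [m [rho [rhoM [p hp]]]] := stab_rep sK cK.
pose psi0 x : ({perm 'I_m.+1} * gT)%type := (rho x, phi x).
have psi0M : is_hom psi0 by move=> x y; rewrite /psi0 rhoM phiM.
pose Hs := [set h | pb (exists x, psi0 x = h)].
have memH : forall h, h \in Hs <-> exists x, psi0 x = h.
  by move=> h; rewrite inE; apply: pbP.
have psi0H : forall x, psi0 x \in Hs by move=> x; apply/memH; exists x.
have gH : group_set Hs.
  apply/group_setP; split; first by apply/memH; exists g1; rewrite hom1.
  by move=> a b /memH [x <-] /memH [y <-]; rewrite -psi0M.
pose H := Group gH.
pose psi x : subg_of H := subg H (psi0 x).
have psiM : is_hom psi by move=> x y; rewrite /psi psi0M subgM.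
pose thf (u : subg_of H) : gT := (sgval u).2.
have thM : {in [set: subg_of H] &, {morph thf : u v / (u * v)%g}} by [].
pose theta := Morphism thM.
have fact : forall x, phi x = theta (psi x) by move=> x; rewrite /= /thf /psi subgK.
have := Hall psiM fact.
case/isogP => alpha injA imA.
have psiS : forall u : subg_of H, exists x, psi x = u.
  by move=> u; have /memH [x ex] := subgP u; exists x; rewrite /psi ex sgvalK.
have mpre : forall (G : {group gT}) u, (u \in (theta @*^-1 G)%G) = (thf u \in G).
  by move=> G u; rewrite !inE.
have thpsi : forall x, thf (psi x) = phi x by move=> x; rewrite (fact x).
have pin : forall (G : {group gT}) x, (psi x \in (theta @*^-1 G)%G) = Del phi G x.
  by move=> G x; rewrite mpre thpsi.
pose A x := psi x = 1%g.
have sA : is_subgroup A.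
  split; rewrite /A; first by rewrite hom1.
    by move=> x y hx hy; rewrite psiM hx hy mulg1.
  by move=> x hx; rewrite homV // hx invg1.
have hA : forall (G : {group gT}) x, A x -> Mn (Del phi G) k x.
  move=> G x hx; apply: (KM_Mn phiM phiS hgen); apply/hp.
  have e : psi0 x = 1%g.
    by have := f_equal sgval hx; rewrite /psi subgK.
  by have := f_equal fst e => /= ->; rewrite perm1.
have psiE : forall x y, A (gi x ** y) <-> psi x = psi y.
  move=> x y; rewrite /A psiM homV //; split; first by move=> h; apply/eqP; rewrite eq_mulVg1 h.
  by move=> ->; rewrite mulVg.
pose R x y := [/\ Del phi G1 x, Del phi G2 y & alpha (psi x) = psi y].
have hR : ciso (Del phi G1) (Del phi G2) A A R.
  split.
  - by move=> x y [].
  - move=> x hx.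
    have h1 : psi x \in (theta @*^-1 G1)%G by rewrite pin.
    have h2 : alpha (psi x) \in (theta @*^-1 G2)%G by rewrite -imA mem_morphim.
    case: (psiS (alpha (psi x))) => y ey; exists y; split=> //.
    by rewrite -pin ey.
  - move=> y hy.
    have : psi y \in (alpha @* (theta @*^-1 G1))%g by rewrite imA pin.
    case/morphimP => u hu1 hu2 eu.
    case: (psiS u) => x ex; exists x; split=> //.
      by rewrite -pin ex.
    by rewrite ex eu.
  - move=> x y y' [hx hy e]; split.
      by case=> _ _ e'; apply/psiE; rewrite -e -e'.
    move/psiE => e'; split=> //; last by rewrite -e'.
    by rewrite /Del -thpsi -e' thpsi.
  - move=> x x' y [hx hy e]; split.
      case=> hx' _ e'; apply/psiE.
      apply: (injmP injA); rewrite ?pin // e e' //.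
    move/psiE => e'; split=> //; last by rewrite -e'.
    by rewrite /Del -thpsi -e' thpsi.
  - move=> x y x' y' [hx hy e] [hx' hy' e']; split.
    + exact: (sgM (Del_sub phiM G1)).
    + exact: (sgM (Del_sub phiM G2)).
    + by rewrite !psiM morphM ?pin // e e'.
have sD1 := Del_sub phiM G1; have sD2 := Del_sub phiM G2.
have sM1 := Mn_subgroup sD1 k; have sM2 := Mn_subgroup sD2 k.
exists (push (Mn (Del phi G1) k) (Mn (Del phi G2) k) R).
apply: (push_ciso sD1 sD2 sA sM1 sM2).
- exact: Mn_sub.
- exact: Mn_sub.
- by move=> x z Dx hz; apply: Mn_normal.
- by move=> x z Dx hz; apply: Mn_normal.
- exact: hR.
move=> x y hxy; split.
  by apply: (ci_pres sD1 sA hR) => // z; apply: hA.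
by apply: (ci_pres sD2 sA (ci_T hR)) => // z; apply: hA.
Qed.
End Fin.

Unset Implicit Arguments.
Set Strict Implicit.
Set Printing Implicit Defensive.

Theorem corollary1p6 (Gam : Grp) (gT : finGroupType) (G1 G2 : {group gT})
    (phi : Gam -> gT) :
  fin_generated Gam ->
  is_hom phi ->
  (forall g : gT, exists x : Gam, phi x = g) ->
  ~ compl_isomorphic (fun x => phi x \in G1) (fun x => phi x \in G2) ->
  exists (hT : finGroupType) (psi : Gam -> hT)
         (theta : {morphism [set: hT] >-> gT}),
    [/\ is_hom psi,
        (forall x, phi x = theta (psi x)) &
        ~ ((theta @*^-1 G1)%G \isog (theta @*^-1 G2)%G)].
Proof.
move=> [n [s hgen]] phiM phiS hnot.
apply: NNPP => Hno; apply: hnot.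
have Hall : forall (hT : finGroupType) (psi : Gam -> hT)
  (theta : {morphism [set: hT] >-> gT}), is_hom psi -> (forall x, phi x = theta (psi x)) ->
  (theta @*^-1 G1)%G \isog (theta @*^-1 G2)%G.
  move=> hT psi theta hpsi hf; case: (boolP ((theta @*^-1 G1)%G \isog (theta @*^-1 G2)%G)) => // hb.
  by exfalso; apply: Hno; exists hT, psi, theta; split=> //; apply/negP.
have sD1 := Del_sub phiM G1; have sD2 := Del_sub phiM G2.
have hf1 := hfin_Del phiM phiS hgen G1.
have hf2 := hfin_Del phiM phiS hgen G2.
have [Rs hRs] := levels sD1 sD2 hf1 hf2 (hne phiM phiS hgen Hall).
have hmono : forall k m x y, k <= m -> Rs m x y -> Rs k x y.
  move=> k m x y /subnK <-; elim: (m - k) => // j IH h; apply: IH.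
  rewrite -(proj2 (hRs (j + k))); exists x, y; split=> //.
    exact: eqm_refl (Mn_subgroup sD1 _).
  exact: eqm_refl (Mn_subgroup sD2 _).
exact: (iso_from_levels sD1 sD2 hf1 hf2 (fun k => proj1 (hRs k)) hmono).
Qed.
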